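(* Let $r\in\mathbb C$ be transcendental over $\mathbb Q$. Let $\Psi_r:\mathsf{PGL}_2(\mathbb Z)\to\mathsf{PGL}_2(\mathbb C)$ (resp. $\Psi^\pm_r$) be the homomorphism obtained from $\Psi$ (resp. $\Psi^\pm$) by substituting $q=r$ in the matrices (after clearing denominators, so that entries are polynomials in $q$ with coefficients in $\mathbb Z[\omega]$). Then $\Psi_r$ and $\Psi^\pm_r$ are injective; i.e. the specialization maps $\Psi(\mathsf{PGL}_2(\mathbb Z))\to\Psi_r(\mathsf{PGL}_2(\mathbb Z))$ and $\Psi^\pm(\mathsf{PGL}_2(\mathbb Z))\to\Psi^\pm_r(\mathsf{PGL}_2(\mathbb Z))$ are isomorphisms.
   Context: $\omega=e^{2\pi i/6}$. An invertible matrix $\begin{bmatrix}a&b\\c&d\end{bmatrix}$ denotes the Möbius map $x\mapsto(ax+b)/(cx+d)$. $\Psi,\Psi^\pm:\mathsf{PGL}_2(\mathbb Z)\to\mathsf{PGL}_2(\mathbb C(q))$ are the homomorphisms defined on the generators $T(x)=1+x$, $S(x)=-1/x$, $V(x)=-x$ by $\Psi(T)=\Psi^\pm(T)=\begin{bmatrix}q&1\\0&1\end{bmatrix}$, $\Psi(S)=\begin{bmatrix}0&-1\\ q&0\end{bmatrix}$, $\Psi(V)=\begin{bmatrix}q&1-q\\ q-q^2&-q\end{bmatrix}$, $\Psi^{\pm}(S)=\begin{bmatrix}1&q^{-1}\\ -q+\omega^{\pm1}&-1\end{bmatrix}$, $\Psi^{\pm}(V)=\begin{bmatrix}1&\frac{1+q^{-1}}{q-\omega^{\pm1}}\\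 1-q&-1\end{bmatrix}$. *)

(* Defs.v *)
From HB Require Import structures.
From mathcomp Require Import all_boot all_order all_algebra.
From mathcomp Require Import complex.
From mathcomp Require Import reals.
Set Implicit Arguments. Unset Strict Implicit. Unset Printing Implicit Defensive.
Import Order.TTheory GRing.Theory Num.Theory.
Local Open Scope ring_scope.

Definition mx2 (K : Type) (a b c d : K) : 'M[K]_2 :=
  \matrix_(i < 2, j < 2)
    if (i : nat) == 0%N then (if (j : nat) == 0%N then a else b)
    else (if (j : nat) == 0%N then c else d).

Inductive gen := genT | genS | genV.

(* A letter is a generator or its inverse (flag true = inverse). *)
Definition letter := (gen * bool)%type.

(* Integer representatives of the generators: T(x)=1+x, S(x)=-1/x, V(x)=-x *)
Definition genZ (g : gen) : 'M[int]_2 :=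
  match g with
  | genT => mx2 1 1 0 1
  | genS => mx2 0 (-1) 1 0
  | genV => mx2 (-1) 0 0 1
  end.

(* The inverse in PGL_2 of a class represented by M is represented by adj M. *)
Definition letter_mx (K : comNzRingType) (f : gen -> 'M[K]_2) (l : letter) : 'M[K]_2 :=
  if l.2 then \adj (f l.1) else f l.1.

Definition word_mx (K : comNzRingType) (f : gen -> 'M[K]_2) (w : seq letter) : 'M[K]_2 :=
  foldr (fun l M => letter_mx f l *m M) 1%:M w.

Definition pglZ_eq (A B : 'M[int]_2) : Prop := A = B \/ A = - B.

Definition pgl_eq (K : fieldType) (A B : 'M[K]_2) : Prop :=
  exists c : K, c != 0 /\ A = c *: B.

Local Open Scope complex_scope.

(* omega = e^{2 pi i/6} = 1/2 + i sqrt(3)/2 *)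
Definition omega (R : realType) : R[i] :=
  ((2%:R)^-1 +i* (Num.sqrt (3%:R : R) / 2%:R))%C.

Definition transcendental (R : realType) (r : R[i]) : Prop :=
  forall p : {poly rat}, p != 0 -> (map_poly (ratr : rat -> R[i]) p).[r] != 0.

Inductive psi_kind := kPsi | kPsiPlus | kPsiMinus.

(* Images of the generators with q := r, denominators cleared
   (Psi^{+-}(S) multiplied by q, Psi^{+-}(V) multiplied by q(q - omega^{+-1})). *)
Definition psi_gen (R : realType) (k : psi_kind) (r : R[i]) (g : gen) : 'M[R[i]]_2 :=
  let w := match k with kPsiMinus => (omega R)^-1 | _ => omega R end in
  match k, g with
  | _, genT => mx2 r 1 0 1
  | kPsi, genS => mx2 0 (-1) r 0
  | kPsi, genV => mx2 r (1 - r) (r - r ^+ 2) (- r)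
  | _, genS => mx2 r 1 (r * (- r + w)) (- r)
  | _, genV => mx2 (r * (r - w)) (r + 1) (r * (1 - r) * (r - w)) (- (r * (r - w)))
  end.

(* Main.v *)
Require Import Defs.
From HB Require Import structures.
From mathcomp Require Import all_boot all_order all_algebra.
From mathcomp Require Import complex reals ring zify.
Set Implicit Arguments. Unset Strict Implicit. Unset Printing Implicit Defensive.
Import Order.TTheory GRing.Theory Num.Theory.
Local Open Scope ring_scope.

Section M2.
Variable K : comNzRingType.
Implicit Types a b c d e f g h : K.

Lemma mx2E (M : 'M[K]_2) : M = mx2 (M 0 0) (M 0 1) (M 1 0) (M 1 1).
Proof. by apply/matrixP => i j; rewrite !mxE; case: i => [[|[|//]] ?]; case: j => [[|[|//]] ?] /=; congr (M _ _); apply: val_inj. Qed.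

Lemma mx2_00 a b c d : mx2 a b c d 0 0 = a. Proof. by rewrite mxE. Qed.
Lemma mx2_01 a b c d : mx2 a b c d 0 1 = b. Proof. by rewrite mxE. Qed.
Lemma mx2_10 a b c d : mx2 a b c d 1 0 = c. Proof. by rewrite mxE. Qed.
Lemma mx2_11 a b c d : mx2 a b c d 1 1 = d. Proof. by rewrite mxE. Qed.

Lemma mx2_mul a b c d e f g h :
  mx2 a b c d *m mx2 e f g h = mx2 (a*e+b*g) (a*f+b*h) (c*e+d*g) (c*f+d*h).
Proof.
apply/matrixP => i j; rewrite !mxE !big_ord_recr big_ord0 /= add0r !mxE.
by case: i => [[|[|//]] ?]; case: j => [[|[|//]] ?].
Qed.

Lemma adj_mx2 a b c d : \adj (mx2 a b c d) = mx2 d (-b) (-c) a.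
Proof.
apply/matrixP => i j; rewrite !mxE /cofactor det_mx11 !mxE.
case: i => [[|[|//]] ?]; case: j => [[|[|//]] ?] /=;
  idtac.
all: by rewrite ?expr0 ?expr1 ?expr2 ?mulN1r ?opprK ?mul1r.
Qed.

Lemma det_mx2 a b c d : \det (mx2 a b c d) = a * d - b * c.
Proof.
rewrite (expand_det_row _ 0) !big_ord_recr big_ord0 /= add0r /cofactor !det_mx11 !mxE /=.
rewrite expr0 expr1 mul1r mulN1r; ring.
Qed.

Lemma scale_mx2 x a b c d : x *: mx2 a b c d = mx2 (x*a) (x*b) (x*c) (x*d).
Proof. by apply/matrixP => i j; rewrite !mxE; case: ifP; case: ifP. Qed.

Lemma scalar_mx2 x : x%:M = mx2 x 0 0 x :> 'M[K]_2.
Proof. by apply/matrixP => i j; rewrite !mxE; case: i => [[|[|//]] ?]; case: j => [[|[|//]] ?]. Qed.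
End M2.

Lemma map_mx2 (K L : comNzRingType) (f : K -> L) (a b c d : K) :
  map_mx f (mx2 a b c d) = mx2 (f a) (f b) (f c) (f d).
Proof. by apply/matrixP => i j; rewrite !mxE; case: ifP; case: ifP. Qed.

Lemma word_ext (K : comNzRingType) (f f' : gen -> 'M[K]_2) w :
  (forall g, f g = f' g) -> word_mx f w = word_mx f' w.
Proof. by move=> h; elim: w => [|l w IH] //=; rewrite /word_mx /= -/(word_mx _ _) IH /letter_mx h. Qed.

Lemma word_map (K L : comNzRingType) (f : {rmorphism K -> L}) (G : gen -> 'M[K]_2) w :
  word_mx (fun g => map_mx f (G g)) w = map_mx f (word_mx G w).
Proof.
elim: w => [|l w IH]; first by rewrite /word_mx /= map_mx1.
rewrite /word_mx /= -!/(word_mx _ _) IH map_mxM /letter_mx.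
by case: l.2 => //; rewrite map_mx_adj.
Qed.

Section SubR.
Variable K : comNzRingType.
Variable w : K.
Hypothesis hw : w ^+ 2 = w - 1.

Definition inS (p : {poly K}) := exists D1 D2 : {poly int},
  p = map_poly (intr : int -> K) D1 + w%:P * map_poly (intr : int -> K) D2.

Lemma inS_add p q : inS p -> inS q -> inS (p + q).
Proof.
move=> [D1 [D2 ->]] [E1 [E2 ->]]; exists (D1 + E1), (D2 + E2).
rewrite !rmorphD /=; ring.
Qed.

Lemma inS_opp p : inS p -> inS (- p).
Proof. move=> [D1 [D2 ->]]; exists (- D1), (- D2); rewrite !rmorphN /=; ring. Qed.

Lemma inS_mul p q : inS p -> inS q -> inS (p * q).
Proof.
have hwP : w%:P ^+ 2 = w%:P - 1 :> {poly K} by rewrite -rmorphXn /= hw rmorphB.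
move=> [D1 [D2 ->]] [E1 [E2 ->]].
exists (D1 * E1 - D2 * E2), (D1 * E2 + D2 * E1 + D2 * E2).
rewrite !(rmorphD, rmorphB, rmorphM) /=; ring: hwP.
Qed.

Lemma inS_X : inS 'X.
Proof. by exists 'X, 0; rewrite map_polyX rmorph0 mulr0 addr0. Qed.
Lemma inS_1 : inS 1.
Proof. by exists 1, 0; rewrite rmorph1 rmorph0 mulr0 addr0. Qed.
Lemma inS_0 : inS 0.
Proof. by exists 0, 0; rewrite rmorph0 mulr0 addr0. Qed.
Lemma inS_w : inS w%:P.
Proof. by exists 0, 1; rewrite rmorph1 rmorph0 mulr1 add0r. Qed.

Definition inSM (M : 'M[{poly K}]_2) := forall i j, inS (M i j).

Lemma inSM_mx2 a b c d : inS a -> inS b -> inS c -> inS d -> inSM (mx2 a b c d).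
Proof. by move=> ha hb hc hd i j; rewrite mxE; case: ifP; case: ifP. Qed.

Lemma inSM_mul A B : inSM A -> inSM B -> inSM (A *m B).
Proof.
move=> hA hB; rewrite (mx2E A) (mx2E B) mx2_mul.
apply: inSM_mx2; apply: inS_add; apply: inS_mul.
all: first [apply: hA | apply: hB].
Qed.

Lemma inSM_adj A : inSM A -> inSM (\adj A).
Proof.
move=> hA; rewrite (mx2E A) adj_mx2; apply: inSM_mx2; try apply: inS_opp; apply: hA.
Qed.

Lemma inSM_word (G : gen -> 'M[{poly K}]_2) w0 :
  (forall g, inSM (G g)) -> inSM (word_mx G w0).
Proof.
move=> hG; elim: w0 => [|l w0 IH].
  rewrite /word_mx /= scalar_mx2.
  by apply: inSM_mx2; [exact: inS_1|exact: inS_0|exact: inS_0|exact: inS_1].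
rewrite /word_mx /= -!/(word_mx _ _); apply: inSM_mul => //.
by rewrite /letter_mx; case: l.2 => //; apply: inSM_adj.
Qed.
End SubR.
Lemma poly_all_int_roots (D : {poly int}) : (forall t : int, D.[t] = 0) -> D = 0.
Proof.
move=> h; apply: (@roots_geq_poly_eq0 _ D [seq (i%:Z) | i <- iota 0 (size D)]).
- by apply/allP => x /mapP [i _ ->]; rewrite /root h.
- by rewrite map_inj_uniq ?iota_uniq // => i j [].
- by rewrite size_map size_iota.
Qed.

Lemma norm_poly0 (D1 D2 : {poly int}) : D1 ^+ 2 + D1 * D2 + D2 ^+ 2 = 0 -> D1 = 0 /\ D2 = 0.
Proof.
move=> h.
have H t : D1.[t] = 0 /\ D2.[t] = 0.
  have : (D1 ^+ 2 + D1 * D2 + D2 ^+ 2).[t] = 0 by rewrite h horner0.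
  rewrite !hornerE => e.
  set x := D1.[t] in e *; set y := D2.[t] in e *.
  split; nia.
by split; apply: poly_all_int_roots => t; case: (H t).
Qed.

Section Trans.
Variable K : comNzRingType.
Variables (w r : K).
Hypothesis hw : w ^+ 2 = w - 1.
Hypothesis htr : forall N : {poly int}, (map_poly (intr : int -> K) N).[r] = 0 -> N = 0.

Lemma inS_root0 p : inS w p -> p.[r] = 0 -> p = 0.
Proof.
move=> [D1 [D2 ->]]; rewrite !hornerE => e.
set x := (map_poly intr D1).[r] in e; set y := (map_poly intr D2).[r] in e.
have hN : (map_poly (intr : int -> K) (D1 ^+ 2 + D1 * D2 + D2 ^+ 2)).[r] = 0.
  rewrite !(rmorphD, rmorphM, rmorphXn) !hornerE -/x -/y.
  have -> : x ^+ 2 + x * y + y ^+ 2 = (x + w * y) * (x + (1 - w) * y) by ring: hw.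
  by rewrite e mul0r.
have [-> ->] := norm_poly0 (htr hN).
by rewrite !rmorph0 mulr0 addr0.
Qed.
End Trans.

Section Conj.
Variable K : fieldType.
Variable a : K.
Definition Pm : 'M[K]_2 := mx2 1 (- a) 0 1.
Definition Pm' : 'M[K]_2 := mx2 1 a 0 1.

Lemma PP' : Pm *m Pm' = 1%:M.
Proof. by rewrite /Pm /Pm' mx2_mul scalar_mx2; congr mx2; ring. Qed.
Lemma P'P : Pm' *m Pm = 1%:M.
Proof. by rewrite /Pm /Pm' mx2_mul scalar_mx2; congr mx2; ring. Qed.

Lemma adj_conj M : \adj (Pm *m M *m Pm') = Pm *m \adj M *m Pm'.
Proof. by rewrite (mx2E M) /Pm /Pm' !mx2_mul !adj_mx2 !mx2_mul; congr mx2; ring. Qed.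

Lemma conj_mul L W : (Pm *m L *m Pm') *m (Pm *m W *m Pm') = Pm *m (L *m W) *m Pm'.
Proof. by rewrite !mulmxA -(mulmxA (Pm *m L) Pm' Pm) P'P mulmx1. Qed.

Lemma word_conj (f h : gen -> 'M[K]_2) (lam : gen -> K) :
  (forall g, lam g != 0) ->
  (forall g, f g = lam g *: (Pm *m h g *m Pm')) ->
  forall w, exists2 c, c != 0 & word_mx f w = c *: (Pm *m word_mx h w *m Pm').
Proof.
move=> hl hf; elim=> [|l w [c c0 IH]].
  by exists 1; rewrite ?oner_neq0 // /word_mx /= scale1r mulmx1 PP'.
have hL : letter_mx f l = lam l.1 *: (Pm *m letter_mx h l *m Pm').
  rewrite /letter_mx hf; case: l.2 => //.
  by rewrite adjZ expr1 adj_conj.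
exists (lam l.1 * c); first by rewrite mulf_neq0.
rewrite /word_mx /= -!/(word_mx _ _) hL IH -scalemxAl -scalemxAr scalerA conj_mul.
by [].
Qed.

Lemma conj_cancel M : Pm' *m (Pm *m M *m Pm') *m Pm = M.
Proof. by rewrite !mulmxA P'P mul1mx -mulmxA P'P mulmx1. Qed.
End Conj.

Definition Gq (K : comNzRingType) (w : K) (k : psi_kind) (g : gen) : 'M[{poly K}]_2 :=
  match k, g with
  | _, genT => mx2 'X 1 0 1
  | kPsi, genS => mx2 0 (-1) 'X 0
  | kPsi, genV => mx2 'X (1 - 'X) ('X - 'X * 'X) (- 'X)
  | _, genS => mx2 'X 1 ('X * (- 'X + w%:P)) (- 'X)
  | _, genV => mx2 ('X * ('X - w%:P)) ('X + 1) ('X * (1 - 'X) * ('X - w%:P)) (- ('X * ('X - w%:P)))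
  end.

Lemma inSM_Gq (K : comNzRingType) (w : K) (hw : w ^+ 2 = w - 1) k g : inSM w (Gq w k g).
Proof.
case: k; case: g => /=; apply: inSM_mx2;
 repeat first [apply: inS_add | apply: (inS_mul hw) | apply: inS_opp | apply: inS_X
              | apply: inS_1 | apply: inS_0 | apply: inS_w].
Qed.

Definition lamk (K : ringType) (w : K) k g : K :=
  match k, g with
  | _, genT => 1
  | kPsi, genS => 1
  | kPsi, genV => -1
  | _, _ => w - 1
  end.

Definition ak (K : ringType) (w : K) k : K := if k is kPsi then 0 else w.

Lemma Gq_1 (K : fieldType) (w : K) (hw : w ^+ 2 = w - 1) k g :
  map_mx (horner_eval 1) (Gq w k g) =
  lamk w k g *: (Pm (ak w k) *m map_mx intr (genZ g) *m Pm' (ak w k)).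
Proof.
case: k; case: g; rewrite /= !map_mx2 /Pm /Pm' !mx2_mul scale_mx2 !horner_evalE !hornerE;
  congr mx2; rewrite /= ?rmorph0 ?rmorph1 ?rmorphN1; ring: hw.
Qed.

Lemma lamk_neq0 (K : fieldType) (w : K) (hw : w ^+ 2 = w - 1) k g : lamk w k g != 0.
Proof.
have h1 : (w - 1) * (- w) = 1 by ring: hw.
have : w - 1 != 0 by apply/eqP => e; move: h1; rewrite e mul0r => /eqP; rewrite eq_sym oner_eq0.
by case: k; case: g => //= _; rewrite ?oppr_eq0 oner_eq0.
Qed.

Lemma det_word w0 : \det (word_mx genZ w0) ^+ 2 = 1.
Proof.
elim: w0 => [|l w0 IH]; first by rewrite /word_mx /= det1 expr1n.
rewrite /word_mx /= -!/(word_mx _ _) det_mulmx exprMn IH mulr1 /letter_mx.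
by case: l => [[] []]; rewrite /= ?adj_mx2 det_mx2.
Qed.

Lemma int_end (A0 B0 : 'M[int]_2) :
  \det A0 ^+ 2 = 1 -> \det B0 ^+ 2 = 1 ->
  (A0 *m \adj B0) 0 1 = 0 -> (A0 *m \adj B0) 1 0 = 0 ->
  (A0 *m \adj B0) 0 0 = (A0 *m \adj B0) 1 1 -> pglZ_eq A0 B0.
Proof.
move=> dA dB z01 z10 z00.
set Z := A0 *m \adj B0 in z01 z10 z00.
set m := Z 0 0.
have hZ : Z = m%:M by rewrite (mx2E Z) z01 z10 -z00 scalar_mx2.
have e1 : \det B0 *: A0 = m *: B0.
  have : Z *m B0 = m *: B0 by rewrite hZ mul_scalar_mx.
  by rewrite /Z -mulmxA mul_adj_mx mul_mx_scalar.
set e := \det B0 * m.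
have hA : A0 = e *: B0.
  by rewrite /e -scalerA -e1 scalerA -expr2 dB scale1r.
have he : e ^+ 2 = \det A0 * \det B0.
  have : \det A0 = e ^+ 2 * \det B0 by rewrite {1}hA detZ.
  move=> ->; rewrite -mulrA -expr2 dB mulr1 //.
have he2 : e ^+ 2 = 1.
  move: dA dB he; set x := \det A0; set y := \det B0 => dA dB he.
  nia.
move/eqP: he2; rewrite sqrf_eq1 => /orP [/eqP h | /eqP h].
  by left; rewrite hA h scale1r.
by right; rewrite hA h scaleN1r.
Qed.

Section Om.
Local Open Scope complex_scope.
Lemma omega_sq (R : realType) : omega R ^+ 2 = omega R - 1.
Proof.
have hs : Num.sqrt (3%:R : R) ^+ 2 = 3%:R by rewrite sqr_sqrtr // ler0n.
rewrite /omega expr2; apply/eqP; rewrite eq_complex /=; apply/andP; split; apply/eqP.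
  by field: hs.
by field.
Qed.
End Om.

Definition wk (R : realType) k : R[i] :=
  match k with kPsiMinus => (omega R)^-1 | _ => omega R end.

Lemma wk_sq (R : realType) k : wk R k ^+ 2 = wk R k - 1.
Proof.
have h := omega_sq R.
case: k => //=.
have -> : (omega R)^-1 = 1 - omega R by apply: mulr1_eq; ring: h.
ring: h.
Qed.

Lemma psi_gen_q (R : realType) k (r : R[i]) g :
  psi_gen k r g = map_mx (horner_eval r) (Gq (wk R k) k g).
Proof.
by case: k; case: g; rewrite /= map_mx2 !horner_evalE !hornerE ?expr2.
Qed.

Lemma htr_of (R : realType) (r : R[i]) : transcendental r ->
  forall N : {poly int}, (map_poly (intr : int -> R[i]) N).[r] = 0 -> N = 0.
Proof.
move=> hr N hN; apply/eqP; apply/negPn/negP => N0.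
have p0 : map_poly (intr : int -> rat) N != 0.
  by rewrite map_poly_eq0_id0 // intr_eq0 lead_coef_eq0.
move: (hr _ p0); rewrite -map_poly_comp.
have -> : map_poly (ratr \o (intr : int -> rat)) N = map_poly (intr : int -> R[i]) N.
  by apply: eq_map_poly => z /=; rewrite ratr_int.
by rewrite hN eqxx.
Qed.

Unset Implicit Arguments.

Theorem mainTheorem7 (R : realType) (r : R[i]) (hr : transcendental r)
  (k : psi_kind) (w1 w2 : seq letter) :
  pgl_eq (word_mx (psi_gen k r) w1) (word_mx (psi_gen k r) w2) ->
  pglZ_eq (word_mx genZ w1) (word_mx genZ w2).
Proof.
move=> [c [c0 E]].
set w := wk R k.
have hw : w ^+ 2 = w - 1 by exact: wk_sq.
have htr := htr_of hr.
set A := word_mx (Gq w k) w1; set B := word_mx (Gq w k) w2.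
have hAr : word_mx (psi_gen k r) w1 = map_mx (horner_eval r) A.
  by rewrite /A -word_map; apply: word_ext => g; rewrite psi_gen_q.
have hBr : word_mx (psi_gen k r) w2 = map_mx (horner_eval r) B.
  by rewrite /B -word_map; apply: word_ext => g; rewrite psi_gen_q.
rewrite hAr hBr in E.
set C := A *m \adj B.
have hCr : map_mx (horner_eval r) C = c *: (\det (map_mx (horner_eval r) B))%:M.
  by rewrite /C map_mxM map_mx_adj E -scalemxAl mul_mx_adj.
have hS : inSM w C.
  apply: (inSM_mul hw); first by rewrite /A; exact: inSM_word (inSM_Gq hw k).
  by apply: inSM_adj; rewrite /B; exact: inSM_word (inSM_Gq hw k).
have ent i j : (C i j).[r] = (c *: (\det (map_mx (horner_eval r) B))%:M) i j.
  by rewrite -hCr [in RHS]mxE horner_evalE.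
have C01 : C 0 1 = 0.
  by apply: (inS_root0 hw htr (hS 0 1)); rewrite ent !mxE /= mulr0n mulr0.
have C10 : C 1 0 = 0.
  by apply: (inS_root0 hw htr (hS 1 0)); rewrite ent !mxE /= mulr0n mulr0.
have C00 : C 0 0 = C 1 1.
  apply/eqP; rewrite -subr_eq0; apply/eqP.
  apply: (inS_root0 hw htr); first by apply: inS_add; [apply: hS | apply: inS_opp; apply: hS].
  by rewrite hornerD hornerN !ent !mxE /= subrr.
set s := (C 0 0).[1].
have hC1 : map_mx (horner_eval 1) C = s%:M.
  by rewrite (mx2E C) C01 C10 -C00 map_mx2 !horner_evalE horner0 scalar_mx2.
have [c1 c10 h1] := word_conj (a := ak w k) (h := fun g => map_mx intr (genZ g))
   (lamk_neq0 hw k) (Gq_1 hw k) w1.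
have [c2 c20 h2] := word_conj (a := ak w k) (h := fun g => map_mx intr (genZ g))
   (lamk_neq0 hw k) (Gq_1 hw k) w2.
rewrite !word_map in h1 h2.
set A0 := word_mx genZ w1 in h1 *; set B0 := word_mx genZ w2 in h2 *.
have key : (c1 * c2) *: map_mx (intr : int -> R[i]) (A0 *m \adj B0) = s%:M.
  move: hC1; rewrite /C map_mxM map_mx_adj /A /B h1 h2 adjZ expr1 adj_conj.
  rewrite -scalemxAl -scalemxAr scalerA conj_mul => e.
  have := congr1 (fun M => Pm' (ak w k) *m M *m Pm (ak w k)) e.
  rewrite /= -scalemxAr -scalemxAl conj_cancel map_mxM map_mx_adj => ->.
  by rewrite mul_mx_scalar -scalemxAl P'P scalemx1.
have cc0 : c1 * c2 != 0 by rewrite mulf_neq0.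
have entZ i j : c1 * c2 * ((A0 *m \adj B0) i j)%:~R = (s%:M : 'M[R[i]]_2) i j.
  by rewrite -key !mxE.
apply: int_end; [exact: det_word | exact: det_word | | | ].
- have := entZ 0 1; rewrite !mxE /= mulr0n => /eqP; rewrite mulf_eq0 (negbTE cc0) /=.
  by rewrite intr_eq0 => /eqP.
- have := entZ 1 0; rewrite !mxE /= mulr0n => /eqP; rewrite mulf_eq0 (negbTE cc0) /=.
  by rewrite intr_eq0 => /eqP.
- have := entZ 0 0; have := entZ 1 1; rewrite !mxE /= !mulr1n => <-.
  by move/(mulfI cc0)/intr_inj.
Qed.
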